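(* Let $s$ be a term such that $s\succ^k t$ for some abstraction $t$. Then $\tau_s\succ^{3k+1}([],[P])$ in the substitution machine for some program $P$ with $P\gg t$.
   Context: Terms (de Bruijn): $s::=n\mid st\mid\lambda s$. Term substitution: $k^k_u=u$, $n^k_u=n$ ($n\ne k$), $(st)^k_u=(s^k_u)(t^k_u)$, $(\lambda s)^k_u=\lambda(s^{k+1}_u)$. Reduction $\succ$: $(\lambda s)(\lambda t)\succ s^0_{\lambda t}$; $s\succ s'\Rightarrow st\succ s't$; $t\succ t'\Rightarrow(\lambda s)t\succ(\lambda s)t'$; $\succ^k$ is $k$-fold reduction. Programs are lists of commands $\mathsf{ret},\mathsf{var}\,n,\mathsf{lam},\mathsf{app}$. Compilation: $\gamma n=[\mathsf{var}\,n]$, $\gamma(st)=\gamma s++\gamma t++[\mathsf{app}]$, $\gamma(\lambda s)=\mathsf{lam}::\gamma s++[\mathsf{ret}]$. $P\gg s$ holds iff $P=\gamma u$ and $s=\lambda u$ for some $u$. $\varphi P:=\varphi_{0,[]}P$ with $\varphi_{0,Q}(\mathsf{ret}::P)=(Q,P)$, $\varphi_{k+1,Q}(\mathsf{ret}::P)=\varphi_{k,Q++[\mathsf{ret}]}P$, $\varphi_{k,Q}(\mathsf{lam}::P)=\varphi_{k+1,Q++[\mathsf{lam}]}P$, $\varphi_{k,Q}(c::P)=\varphi_{k,Q++[c]}P$ for $c$ a $\mathsf{var}$ or $\mathsf{app}$, undefined otherwise. Program substitution: $(\mathsf{var}\,k::P)^k_Q=Q++P^k_Q$; $(\mathsf{var}\,n::P)^k_Q=\mathsf{var}\,n::P^k_Q$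 ($n\ne k$); $(\mathsf{lam}::P)^k_Q=\mathsf{lam}::P^{k+1}_Q$; $(\mathsf{app}::P)^k_Q=\mathsf{app}::P^k_Q$; $(\mathsf{ret}::P)^0_Q=[\mathsf{ret}]$; $(\mathsf{ret}::P)^{k+1}_Q=\mathsf{ret}::P^k_Q$; $[]^k_Q=[]$. The substitution machine has states $(T,V)$ with $T,V$ lists of programs, and steps: $((\mathsf{lam}::P)::T,V)\succ(P'::_{tc}T,\ Q::V)$ if $\varphi P=(Q,P')$; $((\mathsf{app}::P)::T,\ Q::R::V)\succ(R^0_{\mathsf{lam}::Q++[\mathsf{ret}]}::(P::_{tc}T),\ V)$; where $P::_{tc}T:=T$ if $P=[]$ and $P::T$ otherwise. The initial state is $\tau_s:=([\gamma s],[])$. *)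

(* Defs.v *)
From Stdlib Require Import List Arith.
Import ListNotations.

Inductive term : Type :=
| tvar : nat -> term
| tapp : term -> term -> term
| tlam : term -> term.

Fixpoint subst (s : term) (k : nat) (u : term) : term :=
  match s with
  | tvar n => if Nat.eqb n k then u else tvar n
  | tapp s1 s2 => tapp (subst s1 k u) (subst s2 k u)
  | tlam s1 => tlam (subst s1 (S k) u)
  end.

Inductive red : term -> term -> Prop :=
| red_beta : forall s t, red (tapp (tlam s) (tlam t)) (subst s 0 (tlam t))
| red_appL : forall s s' t, red s s' -> red (tapp s t) (tapp s' t)
| red_appR : forall s t t', red t t' -> red (tapp (tlam s) t) (tapp (tlam s) t').

Inductive pow {A : Type} (R : A -> A -> Prop) : nat -> A -> A -> Prop :=
| pow_O : forall x, pow R 0 x x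
| pow_S : forall n x y z, R x y -> pow R n y z -> pow R (S n) x z.

Inductive com : Type :=
| cret : com
| cvar : nat -> com
| clam : com
| capp : com.

Definition prog := list com.

Fixpoint gamma (s : term) : prog :=
  match s with
  | tvar n => [cvar n]
  | tapp s t => gamma s ++ gamma t ++ [capp]
  | tlam s => clam :: gamma s ++ [cret]
  end.

Definition represents (P : prog) (s : term) : Prop :=
  exists u, P = gamma u /\ s = tlam u.

Fixpoint phi_aux (k : nat) (Q : prog) (P : prog) : option (prog * prog) :=
  match P with
  | [] => None
  | cret :: P' =>
      match k with
      | 0 => Some (Q, P')
      | S k' => phi_aux k' (Q ++ [cret]) P'
      end
  | clam :: P' => phi_aux (S k) (Q ++ [clam]) P'
  | c :: P' => phi_aux k (Q ++ [c]) P'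
  end.

Definition phi (P : prog) : option (prog * prog) := phi_aux 0 [] P.

Fixpoint psubst (P : prog) (k : nat) (Q : prog) : prog :=
  match P with
  | [] => []
  | cvar n :: P' => if Nat.eqb n k then Q ++ psubst P' k Q else cvar n :: psubst P' k Q
  | clam :: P' => clam :: psubst P' (S k) Q
  | capp :: P' => capp :: psubst P' k Q
  | cret :: P' =>
      match k with
      | 0 => [cret]
      | S k' => cret :: psubst P' k' Q
      end
  end.

Definition tc (P : prog) (T : list prog) : list prog :=
  match P with
  | [] => T
  | _ => P :: T
  end.

Definition state := (list prog * list prog)%type.

Inductive mstep : state -> state -> Prop :=
| mstep_lam : forall P T V Q P',
    phi P = Some (Q, P') ->
    mstep ((clam :: P) :: T, V) (tc P' T, Q :: V)
| mstep_app : forall P T Q R V,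
    mstep ((capp :: P) :: T, Q :: R :: V)
          (psubst R 0 (clam :: Q ++ [cret]) :: tc P T, V).

Definition tau (s : term) : state := ([gamma s], []).

(* Main.v *)
Require Import Defs.
From Stdlib Require Import List Arith Lia.
Import ListNotations.

Lemma pow_trans {A} (R : A -> A -> Prop) m n x y z :
  pow R m x y -> pow R n y z -> pow R (m + n) x z.
Proof.
  induction 1; intros; simpl; auto. econstructor; eauto.
Qed.

Lemma psubst_gamma : forall s k u P,
  psubst (gamma s ++ P) k (gamma u) = gamma (subst s k u) ++ psubst P k (gamma u).
Proof.
  induction s; intros k u P; simpl.
  - destruct (Nat.eqb n k); simpl; auto; rewrite ?app_assoc; reflexivity.
  - rewrite <- !app_assoc, IHs1, IHs2. simpl. rewrite <- ?app_assoc. reflexivity.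
  - rewrite <- app_assoc, IHs. simpl. rewrite <- ?app_assoc. reflexivity.
Qed.

Lemma phi_gamma : forall s k Q P,
  phi_aux k Q (gamma s ++ P) = phi_aux k (Q ++ gamma s) P.
Proof.
  induction s; intros k Q P; simpl.
  - reflexivity.
  - rewrite <- !app_assoc, IHs1, IHs2. simpl. rewrite <- !app_assoc. reflexivity.
  - rewrite <- app_assoc, IHs. simpl. rewrite <- !app_assoc. reflexivity.
Qed.

Lemma gamma_nonnil s P : exists c l, gamma s ++ P = c :: l.
Proof.
  revert P; induction s; intro P; simpl; eauto.
  rewrite <- app_assoc. apply IHs1.
Qed.

Lemma tc_gamma s P T : tc (gamma s ++ P) T = (gamma s ++ P) :: T.
Proof. destruct (gamma_nonnil s P) as [c [l E]]. rewrite E. reflexivity. Qed.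

Lemma red_lam_inv : forall n x t, pow red n x t -> forall a, x = tlam a -> n = 0 /\ t = tlam a.
Proof.
  induction 1; intros; subst; auto. inversion H.
Qed.

Lemma red_var_inv : forall n x t, pow red n x t -> forall m, x = tvar m -> t = tvar m.
Proof.
  induction 1; intros; subst; auto. inversion H.
Qed.

Lemma red_app_inv : forall n x t, pow red n x t -> forall s1 s2, x = tapp s1 s2 ->
  (exists u, t = tlam u) ->
  exists k1 k2 k3 a b, n = k1 + k2 + S k3 /\ pow red k1 s1 (tlam a) /\
    pow red k2 s2 (tlam b) /\ pow red k3 (subst a 0 (tlam b)) t.
Proof.
  induction 1; intros s1 s2 E [u Hu]; subst.
  - discriminate.
  - inversion H; subst.
    + exists 0, 0, n, s, t. repeat split; try constructor; auto.
    + destruct (IHpow s' s2 eq_refl (ex_intro _ u eq_refl)) as (k1&k2&k3&a&b&?&?&?&?).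
      exists (S k1), k2, k3, a, b. repeat split; auto; try lia. econstructor; eauto.
    + destruct (IHpow (tlam s) t' eq_refl (ex_intro _ u eq_refl)) as (k1&k2&k3&a&b&?&H1&?&?).
      destruct (red_lam_inv _ _ _ H1 s eq_refl) as [-> Ha]. injection Ha as Ha; subst a.
      exists 0, (S k2), k3, s, b. split; [lia|]. split; [constructor|]. split; auto.
      econstructor; eauto.
Qed.

Lemma main : forall k s t, pow red k s t -> (exists u, t = tlam u) ->
  forall P T V, exists Q, pow mstep (3 * k + 1) (tc (gamma s ++ P) T, V) (tc P T, Q :: V)
    /\ represents Q t.
Proof.
  intro k. induction k as [k IH] using lt_wf_ind.
  intros s t Hr Ht P T V. destruct s as [m | s1 s2 | a].
  - rewrite (red_var_inv _ _ _ Hr m eq_refl) in Ht. destruct Ht; discriminate.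
  - destruct (red_app_inv _ _ _ Hr s1 s2 eq_refl Ht) as (k1&k2&k3&a&b&->&H1&H2&H3).
    destruct (IH k1 ltac:(lia) s1 (tlam a) H1 (ex_intro _ a eq_refl)
      (gamma s2 ++ capp :: P) T V) as [Q1 [S1 [u1 [E1 F1]]]].
    injection F1 as <-. subst Q1.
    destruct (IH k2 ltac:(lia) s2 (tlam b) H2 (ex_intro _ b eq_refl)
      (capp :: P) T (gamma a :: V)) as [Q2 [S2 [u2 [E2 F2]]]].
    injection F2 as <-. subst Q2.
    destruct (IH k3 ltac:(lia) _ t H3 Ht [] (tc P T) V) as [Q3 [S3 R3]].
    exists Q3. split; auto.
    simpl gamma. rewrite <- !app_assoc.
    replace (3 * (k1 + k2 + S k3) + 1) with ((3*k1+1) + ((3*k2+1) + (1 + (3*k3+1)))) by lia.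
    eapply pow_trans; [exact S1|].
    eapply pow_trans; [exact S2|].
    simpl tc. eapply pow_trans with (y := (gamma (subst a 0 (tlam b)) :: tc P T, V)).
    + econstructor; [|constructor].
      pose proof (mstep_app P T (gamma b) (gamma a) V) as M.
      pose proof (psubst_gamma a 0 (tlam b) []) as E. simpl in E.
      rewrite !app_nil_r in E. rewrite E in M. exact M.
    + rewrite tc_gamma, app_nil_r in S3. exact S3.
  - destruct (red_lam_inv _ _ _ Hr a eq_refl) as [-> ->].
    exists (gamma a). split; [|exists a; auto].
    simpl. econstructor; [|constructor].
    apply mstep_lam. unfold phi. rewrite <- ?app_assoc. simpl. rewrite phi_gamma. reflexivity.
Qed.

Theorem theorem14 : forall (s t : term) (k : nat),
  pow red k s t -> (exists u, t = tlam u) ->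
  exists P, pow mstep (3 * k + 1) (tau s) ([], [P]) /\ represents P t.
Proof.
  intros s t k Hr Ht.
  destruct (main k s t Hr Ht [] [] []) as [Q [S R]].
  exists Q. split; auto. unfold tau. rewrite tc_gamma, app_nil_r in S. exact S.
Qed.
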